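(* Let $f=(f_V,\{f_{l,v}\}_{v\in V})\colon \mathcal{G}\to \mathcal{G}'$ be a moment graph morphism and let $\xi=\{\xi_v\}_{v\in V}$ be a $\mathcal{G}$-monodromy such that if $v - w\in E$ and $f_V(v)\neq f_V(w)$, then $\xi_v(l'(f_E(v - w)))\in l(v - w)\mathbb{Z}$. Then there is a ring homomorphism between structure algebras \[ f^{\xi\ast}\colon \mathcal{Z}(\mathcal{G}') \to \mathcal{Z}(\mathcal{G}), \quad (z_{v'})_{v'\in V'}\mapsto (\xi_v(z_{f_V(v)}))_{v\in V}, \] called the pull-back map induced by $f$ and twisted by $\xi$.
   Context: A moment graph on a lattice $\Lambda$ is $\mathcal{G}=\big((V,\le), l\colon E\to \Lambda\setminus\{0\}\big)$ with $(V,\le)$ a poset, $E\subset V\times V$ a set of directed edges $v\to w$ labelled by $l(v\to w)\neq 0$, and $v\le w$, $v\ne w$ for every edge $v\to w$; $v - w$ denotes the underlying unoriented edge. A morphism $f\colon\mathcal{G}\to\mathcal{G}'=\big((V',\le'),l'\colon E'\to\Lambda\setminus\{0\}\big)$ consists of a poset map $f_V\colon V\to V'$ such that for each edge $v - w\in E$ either $f_V(v)=f_V(w)$ or $f_V(v) - f_V(w)\in E'$ (in the latter case set $f_E(v - w):=f_V(v) - f_V(w)$), and $\mathbb{Z}$-linear automorphisms $f_{l,v}$ of $\Lambda$ such that for each edge $v - w$ with $f_V(v)\ne f_V(w)$: $f_{l,v}(l(v - w))=\pm l'(f_E(v - w))$ and $f_{l,v}\equiv f_{l,w}$ modulo $l'(f_E(v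 - w))\mathbb{Z}$. A $\mathcal{G}$-monodromy is a collection $\{\xi_v\}_{v\in V}$ of automorphisms of $\Lambda$ with $\xi_v(\lambda)-\xi_w(\lambda)\in l(v\to w)\mathbb{Z}$ for all $v\to w\in E$, $\lambda\in\Lambda$; automorphisms of $\Lambda$ are extended to the ring $S$. For $S=\mathbb{Z}[\Lambda]$ (with $x_\lambda=1-e^{-\lambda}$) or $S=S^*(\Lambda)$ (with $x_\lambda=\lambda$), the structure algebra is $\mathcal{Z}(\mathcal{G})=\{(z_v)_v\in\prod_{v\in V}S\mid z_v-z_w\in x_{l(v\to w)}S\ \forall v\to w\in E\}$ with coordinatewise multiplication. *)

(* Defs.v *)
From HB Require Import structures.
From mathcomp Require Import all_boot all_order all_algebra.
From mathcomp Require Import fraction.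
From mathcomp.multinomials Require Import mpoly.
From Stdlib Require Import ClassicalEpsilon.

Set Implicit Arguments.
Unset Strict Implicit.
Unset Printing Implicit Defensive.

Import Order.TTheory GRing.Theory Num.Theory.
Local Open Scope ring_scope.

(* The lattice Lambda is Z^n, realised as integer row vectors 'rV[int]_n.
   A Z-linear automorphism of Lambda is an invertible integer matrix
   (A \in unitmx, i.e. det A = +-1) acting by  lam |-> lam *m A. *)
Notation lattice n := 'rV[int]_n.
Definition lat_aut n (A : 'M[int]_n) : Prop := A \in unitmx.

Definition in_multZ n (lam mu : lattice n) : Prop :=
  exists k : int, lam = k *: mu.

Record mgraph (n : nat) (V : finType) := MGraph {
  mle : rel V;
  mle_refl : reflexive mle;
  mle_anti : antisymmetric mle;
  mle_trans : transitive mle;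
  medge : rel V;
  mlab : V -> V -> lattice n;          (* label l(v -> w), meaningful on edges *)
  mlab_nz : forall v w, medge v w -> mlab v w != 0;
  medge_le : forall v w, medge v w -> mle v w /\ v <> w
}.

Definition uedge n V (G : mgraph n V) (v w : V) : bool :=
  medge G v w || medge G w v.
Definition ulab n V (G : mgraph n V) (v w : V) : lattice n :=
  if medge G v w then mlab G v w else mlab G w v.

Definition is_mg_morphism n (V V' : finType) (G : mgraph n V) (G' : mgraph n V')
    (fV : V -> V') (fl : V -> 'M[int]_n) : Prop :=
  [/\ (forall v w, mle G v w -> mle G' (fV v) (fV w)),
      (forall v, lat_aut (fl v)),
      (forall v w, uedge G v w -> fV v = fV w \/ uedge G' (fV v) (fV w)) &
      (forall v w, uedge G v w -> fV v <> fV w ->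
         (ulab G v w *m fl v = ulab G' (fV v) (fV w)
          \/ ulab G v w *m fl v = - ulab G' (fV v) (fV w)) /\
         (forall lam : lattice n,
            in_multZ (lam *m fl v - lam *m fl w) (ulab G' (fV v) (fV w))))].

Definition is_monodromy n V (G : mgraph n V) (xi : V -> 'M[int]_n) : Prop :=
  (forall v, lat_aut (xi v)) /\
  (forall v w, medge G v w ->
     forall lam : lattice n, in_multZ (lam *m xi v - lam *m xi w) (mlab G v w)).

(* ---------- Structure algebras (generic coefficient ring) ----------
   S is a commutative ring, inS carves out the ring actually used (for the
   group ring it is a subring of a bigger field), xS lam = x_lam, and
   actS A is the extension of the automorphism A of Lambda to S. *)
Definition struct_alg n V (S : comRingType) (inS : S -> Prop)
    (xS : lattice n -> S) (G : mgraph n V) (z : {ffun V -> S}) : Prop :=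
  (forall v, inS (z v)) /\
  (forall v w, medge G v w ->
     exists s, inS s /\ z v - z w = xS (mlab G v w) * s).

Definition pullback n (V V' : finType) (S : comRingType)
    (actS : 'M[int]_n -> S -> S) (fV : V -> V') (xi : V -> 'M[int]_n)
    (z : {ffun V' -> S}) : {ffun V -> S} :=
  [ffun v => actS (xi v) (z (fV v))].

Definition pullback_ring_hom n (V V' : finType) (S : comRingType)
    (inS : S -> Prop) (xS : lattice n -> S) (actS : 'M[int]_n -> S -> S)
    (G : mgraph n V) (G' : mgraph n V') (fV : V -> V') (xi : V -> 'M[int]_n)
    : Prop :=
  let Z := struct_alg inS xS G in
  let Z' := struct_alg inS xS G' in
  let pb := pullback actS fV xi in
  [/\ (forall z, Z' z -> Z (pb z)),
      pb 1 = 1,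
      (forall z1 z2, Z' z1 -> Z' z2 -> pb (z1 + z2) = pb z1 + pb z2) &
      (forall z1 z2, Z' z1 -> Z' z2 -> pb (z1 * z2) = pb z1 * pb z2)].

(* ---------- S = S^*(Lambda): polynomial ring Z[X_0..X_{n-1}] ---------- *)
Definition SymS n := {mpoly int[n]}.
Definition sym_x n (lam : lattice n) : {mpoly int[n]} :=
  \sum_(i < n) (lam 0 i)%:MP * 'X_i.
(* A acts by X_i = x_{e_i} |-> x_{e_i A}, extended as a ring endomorphism *)
Definition sym_act n (A : 'M[int]_n) (p : {mpoly int[n]}) : {mpoly int[n]} :=
  comp_mpoly [tuple sym_x (delta_mx 0 i *m A) | i < n] p.

(* ---------- S = Z[Lambda]: Laurent polynomials ----------
   Z[Lambda] is realised as the subring of the fraction field of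
   Z[X_0..X_{n-1}] spanned by the Laurent monomials e^lam = prod X_i^(lam_i). *)
Definition FracS n := {fraction {mpoly int[n]}}.
Definition emon n (lam : lattice n) : FracS n :=
  \prod_(i < n) (tofrac ('X_i : {mpoly int[n]})) ^ (lam 0 i).
Definition laur_eval n (c : seq (int * lattice n)) : FracS n :=
  \sum_(p <- c) (p.1)%:~R * emon p.2.
Definition inZL n (s : FracS n) : Prop := exists c, s = laur_eval c.
Definition laur_x n (lam : lattice n) : FracS n := 1 - emon (- lam).
(* A acts by e^lam |-> e^(lam A); defined via a chosen representation
   (independent of the choice on elements of Z[Lambda]). *)
Definition laur_act n (A : 'M[int]_n) (s : FracS n) : FracS n :=
  laur_eval [seq (p.1, p.2 *m A) | p <- epsilon (inhabits [::])
                                              (fun c => s = laur_eval c)].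

(* Main.v *)
Require Import Defs.
From HB Require Import structures.
From mathcomp Require Import all_boot all_order all_algebra.
From mathcomp Require Import fraction.
From mathcomp.multinomials Require Import mpoly.
Set Implicit Arguments. Unset Strict Implicit. Unset Printing Implicit Defensive.
Import Order.TTheory GRing.Theory Num.Theory.
Local Open Scope ring_scope.
From Stdlib Require Import ClassicalEpsilon.
From mathcomp Require Import zify ring.

Lemma generic n (V V' : finType) (S : comRingType) (inS : S -> Prop)
  (xS : lattice n -> S) (actS : 'M[int]_n -> S -> S)
  (G : mgraph n V) (G' : mgraph n V') (fV : V -> V') (fl : V -> 'M[int]_n) (xi : V -> 'M[int]_n) :
  inS 1 ->
  (forall a b, inS a -> inS b -> inS (a + b)) ->
  (forall a b, inS a -> inS b -> inS (a - b)) ->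
  (forall a b, inS a -> inS b -> inS (a * b)) ->
  (forall lam, inS (xS lam)) ->
  (forall A s, inS s -> inS (actS A s)) ->
  (forall A, actS A 1 = 1) ->
  (forall A a b, inS a -> inS b -> actS A (a + b) = actS A a + actS A b) ->
  (forall A a b, inS a -> inS b -> actS A (a * b) = actS A a * actS A b) ->
  (forall A lam, actS A (xS lam) = xS (lam *m A)) ->
  (forall l (k : int), exists s, inS s /\ xS (k *: l) = xS l * s) ->
  (forall l A B, (forall lam, in_multZ (lam *m A - lam *m B) l) ->
     forall s, inS s -> exists t, inS t /\ actS A s - actS B s = xS l * t) ->
  is_mg_morphism G G' fV fl ->
  is_monodromy G xi ->
  (forall v w, uedge G v w -> fV v <> fV w ->
     in_multZ (ulab G' (fV v) (fV w) *m xi v) (ulab G v w)) ->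
  pullback_ring_hom inS xS actS G G' fV xi.
Proof.
move=> in1 inD inB inM inx inact act1 actD actM actx xk cong [_ _ Hue _] [_ Hmon] H3.
have actB A a b : inS a -> inS b -> actS A (a - b) = actS A a - actS A b.
  by move=> ha hb; have := actD A (a - b) b (inB _ _ ha hb) hb; rewrite subrK => ->; rewrite addrK.

split.
- move=> z [zin zedge]; split; first by move=> v; rewrite ffunE; apply: inact.
  move=> v w e; rewrite !ffunE.
  have ue : uedge G v w by rewrite /uedge e.
  have ul : ulab G v w = mlab G v w by rewrite /ulab e.
  have [t [tin tE]] := cong _ _ _ (Hmon v w e) _ (zin (fV w)).
  case: (eqVneq (fV v) (fV w)) => [eq|neq].
    by rewrite eq; exists t.
  have [s' [s'in s'E]] : exists s', inS s' /\
      z (fV v) - z (fV w) = xS (ulab G' (fV v) (fV w)) * s'.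
    case: (Hue v w ue) => [e0|]; first by rewrite e0 eqxx in neq.
    rewrite /ulab /uedge; case: ifP => e'.
      by move=> _; apply: zedge.
    move=> /= e2; have [s [sin sE]] := zedge _ _ e2.
    have in0 : inS 0 by rewrite -(subrr 1); exact: inB.
    exists (- s); split; first by rewrite -sub0r; exact: inB.
    by rewrite mulrN -sE opprB.
  have [k kE] := H3 v w ue (elimN eqP neq).
  rewrite ul in kE.
  have [u [uin uE]] := xk (mlab G v w) k.
  exists (u * actS (xi v) s' + t); split.
    by apply: inD => //; apply: inM => //; apply: inact.
  have -> : actS (xi v) (z (fV v)) - actS (xi w) (z (fV w)) =
    (actS (xi v) (z (fV v)) - actS (xi v) (z (fV w))) + (actS (xi v) (z (fV w)) - actS (xi w) (z (fV w))).
    by rewrite addrA subrK.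
  rewrite tE -actB // s'E actM // actx kE uE mulrDr mulrA //.
- by apply/ffunP => v; rewrite !ffunE act1.
- move=> z1 z2 [h1 _] [h2 _]; apply/ffunP => v; rewrite !ffunE actD //.
- move=> z1 z2 [h1 _] [h2 _]; apply/ffunP => v; rewrite !ffunE actM //.
Qed.

Definition cgr (S : comRingType) (d x y : S) := exists s, x - y = d * s.

Lemma cgr_refl (S : comRingType) (d x : S) : cgr d x x.
Proof. by exists 0; rewrite subrr mulr0. Qed.

Lemma cgr_add (S : comRingType) (d x1 x2 y1 y2 : S) :
  cgr d x1 x2 -> cgr d y1 y2 -> cgr d (x1 + y1) (x2 + y2).
Proof.
move=> [s sE] [t tE]; exists (s + t).
by rewrite mulrDr -sE -tE opprD addrACA.
Qed.

Lemma cgr_mul (S : comRingType) (d x1 x2 y1 y2 : S) :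
  cgr d x1 x2 -> cgr d y1 y2 -> cgr d (x1 * y1) (x2 * y2).
Proof.
move=> [s sE] [t tE]; exists (x1 * t + s * y2).
have -> : x1 * y1 - x2 * y2 = x1 * (y1 - y2) + (x1 - x2) * y2.
  by rewrite mulrBr mulrBl addrA subrK.
by rewrite sE tE mulrDr !mulrA [x1 * d]mulrC.
Qed.

Lemma cgr_exp (S : comRingType) (d x y : S) m :
  cgr d x y -> cgr d (x ^+ m) (y ^+ m).
Proof.
move=> h; elim: m => [|m IH]; first by rewrite !expr0; apply: cgr_refl.
by rewrite !exprS; apply: cgr_mul.
Qed.

Lemma cgr_scale (S : comRingType) (d x y : S) (c : int) :
  cgr d x y -> cgr d (c%:~R * x) (c%:~R * y).
Proof. by move=> h; apply: cgr_mul => //; apply: cgr_refl. Qed.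

Lemma sym_xD n (a b : lattice n) : sym_x (a + b) = sym_x a + sym_x b.
Proof.
rewrite /sym_x -big_split; apply: eq_bigr => i _.
by rewrite mxE raddfD mulrDl.
Qed.

Lemma sym_xZ n (a : lattice n) (k : int) : sym_x (k *: a) = k%:MP * sym_x a.
Proof.
rewrite /sym_x mulr_sumr; apply: eq_bigr => i _.
by rewrite mxE mpolyCM mulrA.
Qed.

Lemma sym_xN n (a : lattice n) : sym_x (- a) = - sym_x a.
Proof. by rewrite -scaleN1r sym_xZ mpolyCN mpolyC1 mulN1r. Qed.

Lemma sym_actE n A (lam : lattice n) : sym_act A (sym_x lam) = sym_x (lam *m A).
Proof.
rewrite /sym_act /sym_x raddf_sum /=.
under eq_bigr => i _ do rewrite rmorphM /= comp_mpolyC comp_mpolyXU -tnth_nth tnth_mktuple.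
under [RHS]eq_bigr => j _ do rewrite mxE raddf_sum /= mulr_suml.
rewrite exchange_big /=; apply: eq_bigr => i _.
rewrite mulr_sumr; apply: eq_bigr => j _.
by rewrite -rowE mxE mpolyCM mulrA.
Qed.

Lemma sym_cong n (l : lattice n) (A B : 'M[int]_n) :
  (forall lam, in_multZ (lam *m A - lam *m B) l) ->
  forall p, cgr (sym_x l) (sym_act A p) (sym_act B p).
Proof.
move=> H p; rewrite /sym_act !comp_mpolyEX.
apply: (big_ind2 (cgr (sym_x l))); first exact: cgr_refl.
  by move=> *; apply: cgr_add.
move=> m _; rewrite !comp_mpolyX.
have [s sE] : cgr (sym_x l) (\prod_(i < n) tnth [tuple sym_x (delta_mx 0 i *m A) | i < n] i ^+ m i)
                              (\prod_(i < n) tnth [tuple sym_x (delta_mx 0 i *m B) | i < n] i ^+ m i).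
  apply: (big_ind2 (cgr (sym_x l))); first exact: cgr_refl.
    by move=> *; apply: cgr_mul.
  move=> i _; apply: cgr_exp; rewrite !tnth_mktuple.
  have [k kE] := H (delta_mx 0 i).
  exists k%:MP; rewrite -sym_xN -sym_xD kE sym_xZ mulrC //.
by exists (p@_m *: s); rewrite -scalerBr sE scalerAr.
Qed.

Lemma sym_part n (V V' : finType) (G : mgraph n V) (G' : mgraph n V')
  (fV : V -> V') (fl : V -> 'M[int]_n) (xi : V -> 'M[int]_n) :
  is_mg_morphism G G' fV fl ->
  is_monodromy G xi ->
  (forall v w, uedge G v w -> fV v <> fV w ->
     in_multZ (ulab G' (fV v) (fV w) *m xi v) (ulab G v w)) ->
  pullback_ring_hom (fun _ : SymS n => True) (@sym_x n) (@sym_act n) G G' fV xi.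
Proof.
move=> H1 H2 H3; apply: (generic _ _ _ _ _ _ _ _ _ _ _ _ H1 H2 H3) => //.
- by move=> A; rewrite /sym_act comp_mpoly1.
- by move=> A a b _ _; rewrite /sym_act raddfD.
- by move=> A a b _ _; rewrite /sym_act rmorphM.
- by move=> A lam; rewrite sym_actE.
- by move=> l k; exists k%:MP; rewrite sym_xZ mulrC.
- move=> l A B H s _; have [t tE] := sym_cong H s; by exists t.
Qed.
Local Open Scope ring_scope.

Lemma X_neq0 n (i : 'I_n) : ('X_i : {mpoly int[n]}) != 0.
Proof.
apply/eqP => h; have := @mcoeffX n int (U_(i)%MM) (U_(i)%MM).
by rewrite h mcoeff0 eqxx.
Qed.

Lemma Xunit n (i : 'I_n) : (tofrac ('X_i : {mpoly int[n]})) \is a GRing.unit.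
Proof. by rewrite unitfE tofrac_eq0 X_neq0. Qed.

Lemma emon0 n : emon (0 : lattice n) = 1.
Proof. by rewrite /emon big1 // => i _; rewrite mxE expr0z. Qed.

Lemma emonD n (a b : lattice n) : emon (a + b) = emon a * emon b.
Proof.
rewrite /emon -big_split; apply: eq_bigr => i _.
by rewrite mxE exprzDr // Xunit.
Qed.

Lemma emonN n (a : lattice n) : emon (- a) * emon a = 1.
Proof. by rewrite -emonD addNr emon0. Qed.

Lemma emon_nat n (a : lattice n) (m : nat) : emon ((m%:Z) *: a) = emon a ^+ m.
Proof.
elim: m => [|m IH]; first by rewrite scale0r emon0 expr0.
by rewrite intS scalerDl scale1r emonD IH exprS.
Qed.

Lemma laur_cat n (c1 c2 : seq (int * lattice n)) :
  laur_eval (c1 ++ c2) = laur_eval c1 + laur_eval c2.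
Proof. by rewrite /laur_eval big_cat. Qed.

Definition negc n (c : seq (int * lattice n)) := [seq (- p.1, p.2) | p <- c].

Lemma laur_neg n (c : seq (int * lattice n)) : laur_eval (negc c) = - laur_eval c.
Proof.
rewrite /laur_eval big_map -sumrN; apply: eq_bigr => p _.
by rewrite mulrNz mulNr.
Qed.

Definition gmap n (g : lattice n -> lattice n) (c : seq (int * lattice n)) :=
  [seq (p.1, g p.2) | p <- c].

Definition mulc n (g : lattice n -> lattice n) (c1 c2 : seq (int * lattice n)) :=
  [seq (p.1 * q.1, g (p.2 + q.2)) | p <- c1, q <- c2].

Lemma laur_mul n (g : lattice n -> lattice n) (c1 c2 : seq (int * lattice n)) :
  (forall a b, g (a + b) = g a + g b) ->
  laur_eval (mulc g c1 c2) = laur_eval (gmap g c1) * laur_eval (gmap g c2).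
Proof.
move=> gD; elim: c1 => [|p c1 IH].
  by rewrite /laur_eval /= !big_nil mul0r.
rewrite /mulc /= laur_cat -/(mulc g c1 c2) IH.
rewrite [laur_eval (_ :: _)]/laur_eval big_cons -/(laur_eval _) mulrDl; congr (_ + _).
rewrite /laur_eval !big_map mulr_sumr; apply: eq_bigr => q _ /=.
by rewrite gD emonD intrM mulrACA.
Qed.

Lemma laur1 n : laur_eval [:: (1, (0 : lattice n))] = 1.
Proof. by rewrite /laur_eval big_seq1 /= emon0 mulr1. Qed.

Lemma laur_single n k (lam : lattice n) : laur_eval [:: (k, lam)] = k%:~R * emon lam.
Proof. by rewrite /laur_eval big_seq1. Qed.

Lemma zero_sum n (R : pzRingType) (F : lattice n -> R) (d : seq (int * lattice n)) :
  (forall lam, \sum_(p <- d | p.2 == lam) p.1 = 0) -> \sum_(p <- d) p.1%:~R * F p.2 = 0.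
Proof.
elim: {d}(size d) {-2}d (leqnn (size d)) => [|N IH] [|p d] //=; rewrite ?big_nil // => hs H.
rewrite (bigID (fun q : int * lattice n => q.2 == p.2)) /=.
have -> : \sum_(q <- p :: d | q.2 == p.2) q.1%:~R * F q.2
          = (\sum_(q <- p :: d | q.2 == p.2) q.1)%:~R * F p.2.
  rewrite mulrz_sumr mulr_suml; apply: eq_bigr => q /eqP ->; by [].
rewrite H mul0r add0r -big_filter.
apply: IH.
  rewrite /= eqxx /= size_filter; exact: leq_trans (count_size _ _) hs.
move=> lam; rewrite big_filter_cond.
have [el|nl] := eqVneq lam p.2.
  by rewrite big_pred0 // => q; rewrite el andNb.
transitivity (\sum_(q <- p :: d | q.2 == lam) q.1); last exact: H.
rewrite !big_cons eqxx /=.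
have -> : (p.2 == lam) = false by rewrite eq_sym; exact: negbTE.
apply: eq_bigl => q; case: (eqVneq q.2 lam) => [->|ne]; first by rewrite nl.
by rewrite andbF.
Qed.


Lemma laur_LI n (d : seq (int * lattice n)) :
  laur_eval d = 0 -> forall lam, \sum_(p <- d | p.2 == lam) p.1 = 0.
Proof.
move=> H0 lam.
have [/hasP [p0 p0in /eqP p0E]|nh] := boolP (has (fun p : int * lattice n => p.2 == lam) d); last by rewrite big_hasC.
pose N : int := \sum_(p <- d) \sum_(i < n) `|p.2 0 i|.
have bnd : forall p, p \in d -> forall i, 0 <= p.2 0 i + N.
  move=> p pin i; rewrite /N (big_rem p pin) /= (bigD1 i) //= !addrA.
  apply: addr_ge0; last first.
    apply: sumr_ge0 => q _; apply: sumr_ge0 => j _; exact: normr_ge0.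
  apply: addr_ge0; last by apply: sumr_ge0 => j _; exact: normr_ge0.
  lia.
pose mu : lattice n := const_mx N.
pose mon (p : int * lattice n) : 'X_{1.. n} := [multinom `|(p.2 0%R i + N)%R|%N | i < n].
have emE : forall p, p \in d -> emon (p.2 + mu) = tofrac ('X_[mon p] : {mpoly int[n]}).
  move=> p pin; rewrite mpolyXE_id rmorph_prod /emon; apply: eq_bigr => i _.
  rewrite rmorphXn /= mnmE !mxE exprnP; congr (_ ^ _); rewrite gez0_abs //; exact: bnd.
have H1 : tofrac (\sum_(p <- d) p.1%:MP * ('X_[mon p] : {mpoly int[n]})) = 0.
  have <- : laur_eval d * emon mu = 0 by rewrite H0 mul0r.
  rewrite rmorph_sum /= /laur_eval mulr_suml.
  rewrite big_seq [RHS]big_seq; apply: eq_bigr => p pin.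
  rewrite rmorphM /= -emE // emonD mulrA; congr (_ * _ * _).
  by rewrite -[in LHS](intz p.1) !rmorph_int.
move/eqP: H1; rewrite tofrac_eq0 => /eqP H2.
have := congr1 (mcoeff (mon p0)) H2; rewrite mcoeff0 raddf_sum /=.
under eq_bigr => p _ do rewrite mcoeffCM mcoeffX.
move=> H3; rewrite -[RHS]H3 big_mkcond /= [LHS]big_seq [RHS]big_seq; apply: eq_bigr => p pin.
have -> : (mon p == mon p0) = (p.2 == lam).
  apply/eqP/eqP => [/mnmP h | e].
    apply/matrixP => i j; rewrite (ord1 i) -p0E; move: (h j); rewrite !mnmE.
    have := bnd p pin j; have := bnd p0 p0in j; by move=> h0 h1 /(congr1 Posz); rewrite !gez0_abs // => /addIr.
  by rewrite /mon; apply/mnmP => i; rewrite !mnmE e p0E.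
by case: (p.2 == lam); rewrite ?mulr1 ?mulr0.
Qed.

Lemma laur_WD n (g : lattice n -> lattice n) (c c' : seq (int * lattice n)) :
  laur_eval c = laur_eval c' -> laur_eval (gmap g c) = laur_eval (gmap g c').
Proof.
move=> h; apply/eqP; rewrite -subr_eq0; apply/eqP.
have : laur_eval (c ++ negc c') = 0 by rewrite laur_cat laur_neg h subrr.
move/laur_LI => H.
have := zero_sum (fun lam => emon (g lam)) H.
rewrite big_cat /= => H'; rewrite -[RHS]H' /laur_eval /negc !big_map -sumrN.
congr (_ + _); apply: eq_bigr => p _ /=; by rewrite mulrNz mulNr.
Qed.

Lemma laur_actE n (A : 'M[int]_n) (c : seq (int * lattice n)) :
  laur_act A (laur_eval c) = laur_eval (gmap (fun x => x *m A) c).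
Proof.
rewrite /laur_act.
have := epsilon_spec (inhabits [::]) (fun c0 => laur_eval c = laur_eval c0) (ex_intro _ c erefl).
move=> /esym E; exact: (laur_WD (fun x => x *m A) E).
Qed.

Lemma inZL_add n (a b : FracS n) : inZL a -> inZL b -> inZL (a + b).
Proof. by move=> [c ->] [c' ->]; exists (c ++ c'); rewrite laur_cat. Qed.

Lemma inZL_opp n (a : FracS n) : inZL a -> inZL (- a).
Proof. by move=> [c ->]; exists (negc c); rewrite laur_neg. Qed.

Lemma inZL_sub n (a b : FracS n) : inZL a -> inZL b -> inZL (a - b).
Proof. by move=> ha hb; apply: inZL_add => //; apply: inZL_opp. Qed.

Lemma gmap_id n (c : seq (int * lattice n)) : gmap id c = c.
Proof. by rewrite /gmap; elim: c => [|[k l] c IH] //=; rewrite IH. Qed.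

Lemma inZL_mul n (a b : FracS n) : inZL a -> inZL b -> inZL (a * b).
Proof.
move=> [c ->] [c' ->]; exists (mulc id c c').
by rewrite laur_mul // !gmap_id.
Qed.

Lemma inZL_single n k (lam : lattice n) : inZL (k%:~R * emon lam).
Proof. by exists [:: (k, lam)]; rewrite laur_single. Qed.

Lemma inZL_1 n : inZL (1 : FracS n).
Proof. by exists [:: (1, 0)]; rewrite laur1. Qed.

Lemma inZL_emon n (lam : lattice n) : inZL (emon lam).
Proof. by have := inZL_single 1 lam; rewrite mul1r. Qed.

Lemma inZL_x n (lam : lattice n) : inZL (laur_x lam).
Proof. by apply: inZL_sub; [exact: inZL_1 | exact: inZL_emon]. Qed.

Lemma geom n (a : lattice n) (m : nat) :
  exists s, inZL s /\ 1 - emon (m%:Z *: a) = (1 - emon a) * s.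
Proof.
exists (laur_eval [seq (1, (i%:Z) *: a) | i <- iota 0 m]); split; first by eexists.
rewrite emon_nat -{1}(expr1n _ m) subrXX; congr (_ * _).
rewrite /laur_eval big_map -(subn0 m) -/(index_iota 0 m) big_mkord subn0.
by apply: eq_bigr => i _; rewrite expr1n mul1r /= mul1r emon_nat.
Qed.

Lemma laur_xk n (l : lattice n) (k : int) :
  exists s, inZL s /\ laur_x (k *: l) = laur_x l * s.
Proof.
rewrite /laur_x; case: k => m.
  have [s [sin sE]] := geom (- l) m.
  by exists s; rewrite -scalerN sE.
have [s [sin sE]] := geom l m.+1.
exists (- emon l * s); split; first by apply: inZL_mul => //; apply: inZL_opp; exact: inZL_emon.
rewrite NegzE scaleNr opprK sE mulrA; congr (_ * _).
by rewrite mulrN mulrBl mul1r emonN opprB.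
Qed.

Lemma laur_cong n (l : lattice n) (A B : 'M[int]_n) :
  (forall lam, in_multZ (lam *m A - lam *m B) l) ->
  forall s, inZL s -> exists t, inZL t /\ laur_act A s - laur_act B s = laur_x l * t.
Proof.
move=> H s [c ->]; rewrite !laur_actE /laur_eval !big_map.
apply: (big_ind2 (fun x y => exists t, inZL t /\ x - y = laur_x l * t)).
- by exists 0; split; [exists [::]; rewrite /laur_eval big_nil | rewrite subrr mulr0].
- move=> x1 x2 y1 y2 [s1 [h1 e1]] [s2 [h2 e2]]; exists (s1 + s2); split.
    exact: inZL_add.
  by rewrite mulrDr -e1 -e2 opprD addrACA.
move=> p _ /=.
have [k kE] := H p.2.
have [s' [s'in s'E]] := laur_xk l (- k).
exists (- (p.1%:~R * emon (p.2 *m B)) * s'); split.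
  by apply: inZL_mul => //; apply: inZL_opp; exact: inZL_single.
have -> : p.2 *m A = k *: l + p.2 *m B by rewrite -kE subrK.
rewrite emonD [RHS]mulrCA -s'E /laur_x scaleNr opprK; ring.
Qed.

Lemma laur_part n (V V' : finType) (G : mgraph n V) (G' : mgraph n V')
  (fV : V -> V') (fl : V -> 'M[int]_n) (xi : V -> 'M[int]_n) :
  is_mg_morphism G G' fV fl ->
  is_monodromy G xi ->
  (forall v w, uedge G v w -> fV v <> fV w ->
     in_multZ (ulab G' (fV v) (fV w) *m xi v) (ulab G v w)) ->
  pullback_ring_hom (@inZL n) (@laur_x n) (@laur_act n) G G' fV xi.
Proof.
move=> H1 H2 H3; apply: (generic _ _ _ _ _ _ _ _ _ _ _ _ H1 H2 H3).
- exact: inZL_1.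
- exact: inZL_add.
- exact: inZL_sub.
- exact: inZL_mul.
- exact: inZL_x.
- by move=> A s _; rewrite /laur_act; eexists.
- by move=> A; rewrite -laur1 laur_actE /gmap /= mul0mx.
- move=> A a b [c ->] [c' ->]; by rewrite -laur_cat !laur_actE /gmap map_cat laur_cat.
- move=> A a b [c ->] [c' ->].
  have -> : laur_eval c * laur_eval c' = laur_eval (mulc id c c') by rewrite laur_mul // !gmap_id.
  rewrite !laur_actE -laur_mul; last by move=> x y; rewrite mulmxDl.
  congr laur_eval; rewrite /gmap /mulc.
  by elim: c => [|p c IH] //=; rewrite map_cat IH -map_comp.
- move=> A lam; rewrite /laur_x.
  have -> : 1 - emon (- lam) = laur_eval [:: (1, 0); (-1, - lam)].
    by rewrite /laur_eval !big_cons big_nil emon0 /=; ring.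
  rewrite laur_actE /laur_eval /gmap /= !big_cons big_nil mul0mx emon0 mulNmx /=; ring.
- exact: laur_xk.
- exact: laur_cong.
Qed.

Unset Implicit Arguments.
Close Scope ring_scope.

Theorem mainTheorem2 (n : nat) (V V' : finType)
  (G : mgraph n V) (G' : mgraph n V')
  (fV : V -> V') (fl : V -> 'M[int]_n) (xi : V -> 'M[int]_n) :
  is_mg_morphism G G' fV fl ->
  is_monodromy G xi ->
  (forall v w, uedge G v w -> fV v <> fV w ->
     in_multZ (ulab G' (fV v) (fV w) *m xi v) (ulab G v w)) ->
  pullback_ring_hom (fun _ : SymS n => True) (@sym_x n) (@sym_act n) G G' fV xi
  /\ pullback_ring_hom (@inZL n) (@laur_x n) (@laur_act n) G G' fV xi.
Proof.
move=> H1 H2 H3; split; [exact: (sym_part H1 H2 H3) | exact: (laur_part H1 H2 H3)].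
Qed.
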